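(* Let $\mathcal{A}$ be a finite alphabet and $\mathcal{F}$ a finite set of finite patterns on $\mathbb{Z}^d$. Player $B$ has a winning strategy in $\Gamma(\mathcal{A},\mathcal{F},\mathbb{Z}^d)$ if and only if, for every integer $n\ge 1$, player $B$ has a winning strategy in $\Gamma(\mathcal{A},\mathcal{F},\llbracket -n,n\rrbracket^d)$.
   Context: Fix $d\ge 1$ and a finite alphabet $\mathcal{A}$. A pattern is a pair $p=(S,f)$ with $S\subseteq\mathbb{Z}^d$ and $f\in\mathcal{A}^S$. A finite pattern $q=(S',g)$ appears in a pattern $p=(S,f)$ if there is $v\in\mathbb{Z}^d$ with $v+S'\subseteq S$ and $f(v+j)=g(j)$ for all $j\in S'$. For a finite set $\mathcal{F}$ of finite patterns and $E\subseteq\mathbb{Z}^d$, the Domino game $\Gamma(\mathcal{A},\mathcal{F},E)$ is played by two players $A$ and $B$ who alternate turns, $A$ moving first, starting from the empty pattern. On each turn the current player either passes, or chooses a cell $i\in E$ not yet coloured and a colour $a\in\mathcal{A}$ and colours $i$ with $a$. As soon as some pattern of $\mathcal{F}$ appears in the current pattern, the game ends and $A$ wins; the game also ends if all of $E$ is coloured. $B$ wins if no pattern of $\mathcal{F}$ ever appears. A strategy is winning for a player if that player wins every game in which they follow it. $\llbracket -n,n\rrbracket=\{-n,\dots,n\}$. *)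

(* Defs.v *)
From mathcomp Require Import all_boot all_order all_algebra.
Set Implicit Arguments. Unset Strict Implicit. Unset Printing Implicit Defensive.
Import GRing.Theory Num.Theory.
Local Open Scope ring_scope.

Definition cell (d : nat) := 'rV[int]_d.

(* A finite pattern (S', g) is encoded as the finite list of pairs (j, g j), j in S'. *)
Definition fpattern (d : nat) (A : finType) := seq (cell d * A).

(* well-formed: each cell occurs at most once (so the list is the graph of a function) *)
Definition wf_pattern d (A : finType) (p : fpattern d A) : bool := uniq (map fst p).

Definition partial_col d (A : finType) := cell d -> option A.

Definition appears d (A : finType) (q : fpattern d A) (c : partial_col d A) : Prop :=
  exists v : cell d, forall ja, ja \in q -> c (v + ja.1) = Some ja.2.

(* A move: None = pass, Some (i, a) = colour cell i with colour a. *)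
Definition move d (A : finType) := option (cell d * A).

Definition apply_move d (A : finType) (c : partial_col d A) (m : move d A)
  : partial_col d A :=
  match m with
  | None => c
  | Some (i, a) => fun x => if x == i then Some a else c x
  end.

Definition state d (A : finType) (h : seq (move d A)) : partial_col d A :=
  foldl (@apply_move d A) (fun _ => None) h.

Definition legal d (A : finType) (E : pred (cell d)) (c : partial_col d A)
  (m : move d A) : Prop :=
  match m with
  | None => True
  | Some (i, a) => E i /\ c i = None
  end.

Definition strategy d (A : finType) := seq (move d A) -> move d A.

Definition hist d (A : finType) (m : nat -> move d A) (t : nat) := mkseq m t.

(* A plays at even times (A moves first), B at odd times.
   A strategy sigma for B is winning in Gamma(A,F,E) if it always proposes
   legal moves and, in every play where all moves are legal and B follows
   sigma, no pattern of F ever appears.  (Once E is fully coloured only passes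
   are legal, and once a pattern of F appears B has lost, so modelling plays as
   infinite sequences of moves is faithful.) *)
Definition B_winning_strategy d (A : finType) (F : seq (fpattern d A))
  (E : pred (cell d)) (sigma : strategy d A) : Prop :=
  (forall h, legal E (state h) (sigma h)) /\
  forall m : nat -> move d A,
    (forall t, legal E (state (hist m t)) (m t)) ->
    (forall t, odd t -> m t = sigma (hist m t)) ->
    forall t q, q \in F -> ~ appears q (state (hist m t)).

Definition B_wins d (A : finType) (F : seq (fpattern d A)) (E : pred (cell d))
  : Prop := exists sigma, B_winning_strategy F E sigma.

Definition box (d : nat) (n : nat) : pred (cell d) :=
  fun x => [forall i : 'I_d, (- (n%:Z) <= x ord0 i) && (x ord0 i <= n%:Z)].
Arguments box : clear implicits.

(* Main.v *)
Require Import Defs.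
From mathcomp Require Import all_boot all_order all_algebra.
From mathcomp Require Import zify.
From Stdlib Require Import Classical ClassicalEpsilon.
Set Implicit Arguments. Unset Strict Implicit. Unset Printing Implicit Defensive.


Fixpoint playH d (A : finType) (sB sA : strategy d A) (t : nat) : seq (move d A) :=
  match t with
  | 0 => [::]
  | t'.+1 => let h := playH sB sA t' in
             rcons h (if odd t' then sB h else sA h)
  end.

Definition play d (A : finType) (sB sA : strategy d A) (t : nat) : move d A :=
  nth None (playH sB sA t.+1) t.

Lemma size_playH d A (sB sA : strategy d A) t : size (playH sB sA t) = t.
Proof. by elim: t => //= t IH; rewrite size_rcons IH. Qed.

Lemma play_eq d A (sB sA : strategy d A) t :
  play sB sA t = if odd t then sB (playH sB sA t) else sA (playH sB sA t).
Proof. by rewrite /play /= nth_rcons size_playH ltnn eqxx. Qed.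

Lemma hist_play d A (sB sA : strategy d A) t : hist (play sB sA) t = playH sB sA t.
Proof.
elim: t => // t IH; rewrite /hist mkseqS -/(hist _ _) IH /= play_eq //.
Qed.

Lemma playH_ext d A (sB sA sA' : strategy d A) t :
  (forall h, (size h < t)%N -> sA h = sA' h) -> playH sB sA t = playH sB sA' t.
Proof.
elim: t => // t IH H /=.
rewrite IH; last by move=> h Hh; apply: H; apply: ltnW.
by rewrite H // size_playH.
Qed.

Lemma state_rcons d A (h : seq (move d A)) x : state (rcons h x) = apply_move (state h) x.
Proof. by rewrite /state foldl_rcons. Qed.

Lemma state_histS d A (m : nat -> move d A) t :
  state (hist m t.+1) = apply_move (state (hist m t)) (m t).
Proof. by rewrite /hist mkseqS state_rcons. Qed.

Definition ext d (A : finType) (c c' : partial_col d A) :=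
  forall x a, c x = Some a -> c' x = Some a.

Lemma appears_ext d A (q : fpattern d A) c c' : ext c c' -> appears q c -> appears q c'.
Proof. by move=> E [v Hv]; exists v => ja /Hv /E. Qed.

Lemma legal_ext d A E (c : partial_col d A) mv : legal E c mv -> ext c (apply_move c mv).
Proof.
case: mv => [[i a]|] /=; last by move=> _ x b.
move=> [_ Hi] x b; case: eqP => [->|//]; by rewrite Hi.
Qed.


Definition filt d (A : finType) n (h : seq (move d A)) (mv : move d A) : move d A :=
  match mv with
  | Some (i, a) => if box d n i && (state h i == None) then Some (i, a) else None
  | None => None
  end.

Definition tau d (A : finType) n (sigma : strategy d A) : strategy d A :=
  fun h => filt n h (sigma (playH sigma (fun h' => nth None h (size h')) (size h))).

Lemma dir1 d (A : finType) (F : seq (fpattern d A)) n :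
  B_wins F (fun _ : cell d => true) -> B_wins F (box d n).
Proof.
move=> [sigma [Hleg Hwin]].
exists (tau n sigma); split.
  move=> h; rewrite /tau /filt.
  case: (sigma _) => [[i a]|] //=.
  by case: ifP => // /andP [Hb /eqP Hs].
move=> m Hm Hodd.
pose m' := play sigma (fun h' => m (size h')).
have Htau : forall t, odd t -> m t = filt n (hist m t) (sigma (hist m' t)).
  move=> t Ht; rewrite Hodd // /tau /m' hist_play size_mkseq.
  congr (filt _ _ (sigma _)); apply: playH_ext => h Hh.
  by rewrite nth_mkseq.
have Hm'e : forall t, ~~ odd t -> m' t = m t.
  by move=> t Ht; rewrite /m' play_eq (negbTE Ht) size_playH.
have Hm'o : forall t, odd t -> m' t = sigma (hist m' t).
  by move=> t Ht; rewrite /m' play_eq Ht hist_play.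
have Inv : forall t x, state (hist m t) x =
    if box d n x then state (hist m' t) x else None.
  elim=> [|t IH] x; first by rewrite /state /=; case: ifP.
  rewrite !state_histS.
  case Ht: (odd t).
    rewrite (Htau t Ht) (Hm'o t Ht).
    have := Hleg (hist m' t).
    case: (sigma (hist m' t)) => [[i a]|] /=; last by move=> _; apply: IH.
    move=> [_ Hi].
    case Hb: (box d n i); case Hs: (state (hist m t) i == None) => /=.
    - by case: eqP => [->|_]; [rewrite Hb | apply: IH].
    - by move: Hs; rewrite IH Hb Hi.
    - by case: eqP => [->|_]; [rewrite Hb IH Hb | apply: IH].
    - by case: eqP => [->|_]; [rewrite Hb IH Hb | apply: IH].
  rewrite (Hm'e t (negbT Ht)).
  have := Hm t; case: (m t) => [[i a]|] /=; last by move=> _; apply: IH.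
  move=> [Hb _]; case: eqP => [->|_]; [by rewrite Hb | by apply: IH].
have Hlegm' : forall t, legal (fun _ : cell d => true) (state (hist m' t)) (m' t).
  move=> t; case Ht: (odd t); first by rewrite (Hm'o t Ht); apply: Hleg.
  rewrite (Hm'e t (negbT Ht)); have := Hm t.
  case: (m t) => [[i a]|] //= [Hb Hi]; split => //.
  by move: Hi; rewrite Inv Hb.
move=> t q Hq Ha.
apply: (Hwin m' Hlegm' Hm'o t q Hq).
apply: appears_ext Ha => x a.
by rewrite Inv; case: ifP.
Qed.


Definition WA d (A : finType) (F : seq (fpattern d A)) n (c : partial_col d A) : Prop :=
  exists sigma, B_winning_strategy F (box d n) sigma /\
  exists m : nat -> move d A,
    (forall t, legal (box d n) (state (hist m t)) (m t)) /\
    (forall t, odd t -> m t = sigma (hist m t)) /\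
    exists t, ~~ odd t /\ forall x, state (hist m t) x = c x.

Lemma legal_eqf d A E (c c' : partial_col d A) mv :
  (forall x, c x = c' x) -> legal E c mv -> legal E c' mv.
Proof. by move=> H; case: mv => [[i a]|] //= [Hi Hc]; rewrite -H. Qed.

Lemma apply_eqf d A (c c' : partial_col d A) mv :
  (forall x, c x = c' x) -> forall x, apply_move c mv x = apply_move c' mv x.
Proof. by move=> H x; case: mv => [[i a]|] //=; rewrite H. Qed.

Lemma WA_init d A (F : seq (fpattern d A)) n :
  B_wins F (box d n) -> WA F n (fun _ => None).
Proof.
move=> [sigma [Hleg Hwin]]; exists sigma; split; first by [].
exists (play sigma (fun _ => None)); split; last split.
- move=> t; rewrite hist_play play_eq; case: ifP => // _; rewrite -hist_play; apply: Hleg.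
- by move=> t Ht; rewrite play_eq Ht hist_play.
- by exists 0.
Qed.

Lemma WA_nopat d A (F : seq (fpattern d A)) n c :
  WA F n c -> forall q, q \in F -> ~ appears q c.
Proof.
move=> [sigma [[Hleg Hwin] [m [Hm [Ho [t [_ Ht]]]]]]] q Hq Ha.
apply: (Hwin m Hm Ho t q Hq); apply: appears_ext Ha => x a.
by rewrite Ht.
Qed.

Lemma WA_step d A (F : seq (fpattern d A)) n c mv :
  WA F n c -> legal (box d n) c mv ->
  exists b, legal (box d n) (apply_move c mv) b /\
            WA F n (apply_move (apply_move c mv) b).
Proof.
move=> [sigma [[Hleg Hwin] [m [Hm [Ho [t0 [Hev Hc]]]]]]] Hmv.
pose f : strategy d A := fun h => if (size h < t0)%N then m (size h)
                                  else if size h == t0 then mv else None.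
pose m2 := play sigma f.
have Hm2o : forall s, odd s -> m2 s = sigma (hist m2 s).
  by move=> s Hs; rewrite /m2 play_eq Hs hist_play.
have Hm2e : forall s, ~~ odd s -> m2 s = f (hist m2 s).
  by move=> s Hs; rewrite /m2 play_eq (negbTE Hs) hist_play.
have H1 : forall s, (s <= t0)%N -> hist m2 s = hist m s /\ (s < t0 -> m2 s = m s)%N.
  elim=> [|s IH] Hs.
    split => // H0; case E0: (odd 0) => //.
    by rewrite Hm2e // /f /= H0.
  have [IH1 IH2] := IH (ltnW Hs).
  have Hs' : m2 s = m s by apply: IH2.
  split; first by rewrite /hist !mkseqS -!/(hist _ _) IH1 Hs'.
  move=> Hst; case Hos: (odd s.+1).
    by rewrite Hm2o // Ho // /hist !mkseqS -!/(hist _ _) IH1 Hs'.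
  by rewrite Hm2e ?Hos // /f size_mkseq Hst.
have [Ht0 _] := H1 t0 (leqnn _).
have Hm2t0 : m2 t0 = mv by rewrite Hm2e // /f size_mkseq ltnn eqxx.
have Hst0 : forall x, state (hist m2 t0) x = c x by move=> x; rewrite Ht0 Hc.
have Hlegm2 : forall s, legal (box d n) (state (hist m2 s)) (m2 s).
  move=> s; case Hs: (odd s); first by rewrite Hm2o //; apply: Hleg.
  rewrite Hm2e ?Hs // /f size_mkseq.
  case: ltnP => Hst.
    by have [-> _] := H1 s (ltnW Hst).
  case: eqP => [Es|//]; subst s.
  rewrite Ht0; apply: legal_eqf Hmv => x; by rewrite Hc.
exists (m2 t0.+1); split.
  have := Hlegm2 t0.+1; apply: legal_eqf => x.
  by rewrite state_histS Hm2t0; apply: apply_eqf.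
exists sigma; split; first by [].
exists m2; split; first by []; split; first by [].
exists t0.+2; split; first by rewrite /= negbK.
move=> x; rewrite state_histS; apply: apply_eqf => y.
by rewrite state_histS Hm2t0; apply: apply_eqf.
Qed.



Lemma box_mono d j k (x : cell d) : (j <= k)%N -> box d j x -> box d k x.
Proof.
move=> Hjk /forallP H; apply/forallP => i; have /andP [H1 H2] := H i.
apply/andP; split; lia.
Qed.

Lemma box_ex d (x : cell d) : exists k, box d k x.
Proof.
exists (\sum_(i < d) `|x ord0 i|)%N; apply/forallP => i.
have : (`|x ord0 i| <= \sum_(i < d) `|x ord0 i|)%N.
  by rewrite (bigD1 i) //= leq_addr.
move: (\sum_(i < d) `|x ord0 i|)%N => s H; apply/andP; split; lia.
Qed.

Definition code d j0 (x : cell d) : {ffun 'I_d -> 'I_(2 * j0).+1} :=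
  [ffun i => inord (absz (x ord0 i + j0%:Z)%R)].

Lemma code_inj d j0 (x y : cell d) : box d j0 x -> box d j0 y -> code j0 x = code j0 y -> x = y.
Proof.
move=> /forallP Hx /forallP Hy Hc; apply/matrixP => i' i; have -> : i' = ord0 by apply/val_inj; case: i' => [[]].
have := congr1 (fun f : {ffun 'I_d -> 'I_(2 * j0).+1} => nat_of_ord (f i)) Hc; rewrite /code !ffunE /=.
have /andP [H1 H2] := Hx i; have /andP [H3 H4] := Hy i.
rewrite !inordK; lia.
Qed.

Lemma pigeon (T : eqType) (P : T -> nat -> Prop) (L : seq T) K :
  (forall k, (K <= k)%N -> exists b, b \in L /\ P b k) ->
  exists b, b \in L /\ forall j, exists k, (j <= k)%N /\ P b k.
Proof.
elim: L K => [|y L IH] K H.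
  by have [b [Hb _]] := H K (leqnn _).
case: (classic (forall j, exists k, (j <= k)%N /\ P y k)) => Hy.
  by exists y; rewrite mem_head.
have [j1 Hj1] : exists j1, forall k, (j1 <= k)%N -> ~ P y k.
  apply: NNPP => Hn; apply: Hy => j; apply: NNPP => Hk; apply: Hn; exists j => k Hjk Pk.
  by apply: Hk; exists k.
have [b [Hb Pb]] : exists b, b \in L /\ forall j, exists k, (j <= k)%N /\ P b k.
  apply: (IH (maxn K j1)) => k Hk.
  have [b [Hb Pb]] := H k (leq_trans (leq_maxl _ _) Hk).
  exists b; split => //; move: Hb; rewrite in_cons => /orP [/eqP Eb|//].
  by subst b; exfalso; apply: (Hj1 k (leq_trans (leq_maxr _ _) Hk)).
by exists b; rewrite in_cons Hb orbT.
Qed.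


Definition agree d (A : finType) k (c c' : partial_col d A) :=
  forall x, box d k x -> c' x = c x.

Definition good d (A : finType) (F : seq (fpattern d A)) (c : partial_col d A) :=
  forall k, exists n c', (k <= n)%N /\ WA F n c' /\ ext c c' /\ agree k c c'.

Lemma ext_apply d A (c c' : partial_col d A) mv : ext c c' -> ext (apply_move c mv) (apply_move c' mv).
Proof. by move=> H x a; case: mv => [[i b]|] /=; [case: eqP => // _; apply: H | apply: H]. Qed.

Lemma apply_pt d A (c c' : partial_col d A) mv x : c' x = c x -> apply_move c' mv x = apply_move c mv x.
Proof. by case: mv => [[i b]|] //= ->. Qed.

Lemma ext_trans d A (c1 c2 c3 : partial_col d A) : ext c1 c2 -> ext c2 c3 -> ext c1 c3.
Proof. by move=> H1 H2 x a /H1 /H2. Qed.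

Lemma good_nopat d A (F : seq (fpattern d A)) c : good F c -> forall q, q \in F -> ~ appears q c.
Proof.
move=> /(_ 0%N) [n [c' [_ [HW [He _]]]]] q Hq Ha.
by apply: (WA_nopat HW Hq); apply: appears_ext Ha.
Qed.

Lemma good_init d A (F : seq (fpattern d A)) :
  (forall n : nat, (1 <= n)%N -> B_wins F (box d n)) -> good F (fun _ => None).
Proof.
move=> H k; exists k.+1, (fun _ => None); split; first exact: leqnSn.
split; first by apply: WA_init; apply: H.
by split.
Qed.

Lemma good_step d A (F : seq (fpattern d A)) c mv :
  good F c -> legal (fun _ : cell d => true) c mv ->
  exists b, legal (fun _ : cell d => true) (apply_move c mv) b /\
            good F (apply_move (apply_move c mv) b).
Proof.
move=> Hg Hmv.
have [k0 Hk0] : exists k0, forall i a, mv = Some (i, a) -> box d k0 i.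
  case: mv Hmv => [[i a]|] _; last by exists 0%N.
  by have [k Hk] := box_ex i; exists k => i' a' [<- _].
have HL : forall k n c', (k0 <= k)%N -> (k <= n)%N -> agree k c c' -> legal (box d n) c' mv.
  move=> k n c' Hk Hkn Ha.
  case: mv Hmv Hk0 => [[i a]|] // [_ Hi] Hk0; split.
    exact: box_mono (leq_trans Hk Hkn) (Hk0 i a erefl).
  by rewrite Ha // (box_mono Hk (Hk0 i a erefl)).
pose Wit k b := exists n c', (k <= n)%N /\ WA F n c' /\ ext c c' /\ agree k c c' /\
   legal (box d n) (apply_move c' mv) b /\ WA F n (apply_move (apply_move c' mv) b).
have Hwit : forall k, (k0 <= k)%N -> exists b, Wit k b.
  move=> k Hk; have [n [c' [Hkn [HW [He Ha]]]]] := Hg k.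
  have Hmv' := HL k n c' Hk Hkn Ha.
  have [b [Hb HWb]] := WA_step HW Hmv'.
  by exists b, n, c'.
case: (classic (forall j, exists k b, (j <= k)%N /\ (k0 <= k)%N /\ Wit k b /\
          (b = None \/ exists x a, b = Some (x, a) /\ ~~ box d j x))) => Hcase.
  exists None; split; first by [].
  move=> j; have [k [b [Hjk [Hk0k [[n [c' [Hkn [HW [He [Ha [Hb HWb]]]]]]] Hbj]]]]] := Hcase j.
  exists n, (apply_move (apply_move c' mv) b); split; first exact: leq_trans Hjk Hkn.
  split; first by []. split.
    exact: (ext_trans (ext_apply (mv := mv) He) (legal_ext Hb)).
  move=> x Hx /=.
  have -> : apply_move (apply_move c' mv) b x = apply_move c' mv x.
    case: Hbj => [->//|[y [a [-> Hy]]]] /=.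
    by case: eqP => // Exy; move: Hy; rewrite -Exy Hx.
  by apply: apply_pt; apply: Ha; apply: box_mono Hjk Hx.
have [j0 Hj0] : exists j0, forall k b, (j0 <= k)%N -> (k0 <= k)%N -> Wit k b ->
                  exists x a, b = Some (x, a) /\ box d j0 x.
  apply: NNPP => Hn; apply: Hcase => j; apply: NNPP => Hn2; apply: Hn.
  exists j => k b Hjk Hk0k Hw.
  case: b Hw => [[x a]|] Hw.
    exists x, a; split => //; apply: NNPP => Hx; apply: Hn2.
    exists k, (Some (x, a)); do 3 (split => //); right; exists x, a; split => //.
    by apply/negP.
  by exfalso; apply: Hn2; exists k, None; do 3 (split => //); left.
pose T := ({ffun 'I_d -> 'I_(2 * j0).+1} * A)%type.
pose P (t : T) k := exists x a, Wit k (Some (x, a)) /\ box d j0 x /\ t = (code j0 x, a).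
have [t [_ Ht]] : exists t, t \in enum (T : finType) /\ forall j, exists k, (j <= k)%N /\ P t k.
  apply: (pigeon (K := maxn j0 k0)) => k Hk.
  have Hj0k : (j0 <= k)%N by apply: leq_trans (leq_maxl _ _) Hk.
  have Hk0k : (k0 <= k)%N by apply: leq_trans (leq_maxr _ _) Hk.
  have [b Hb] := Hwit k Hk0k.
  have [x [a [Eb Hx]]] := Hj0 k b Hj0k Hk0k Hb.
  exists (code j0 x, a); split; first by rewrite mem_enum.
  by exists x, a; subst b.
have [k1 [Hk1 [x1 [a1 [Hw1 [Hx1 Et1]]]]]] := Ht (maxn j0 k0).
exists (Some (x1, a1)); split.
  split => //.
  have [n [c' [Hkn [HW [He [Ha [Hb HWb]]]]]]] := Hw1.
  case: Hb => _ Hb; rewrite -Hb; apply: esym; apply: apply_pt; apply: Ha.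
  exact: box_mono (leq_trans (leq_maxl _ _) Hk1) Hx1.
move=> j.
have [k [Hk [x [a [Hw [Hx Et]]]]]] := Ht (maxn j (maxn j0 k0)).
move: Et; rewrite Et1 => -[Ec Ea]; subst a.
have Exx := code_inj Hx1 Hx Ec; subst x.
have [n [c' [Hkn [HW [He [Ha [Hb HWb]]]]]]] := Hw.
exists n, (apply_move (apply_move c' mv) (Some (x1, a1))); split.
  by apply: leq_trans Hkn; apply: leq_trans Hk; apply: leq_maxl.
split; first by []. split.
  by apply: ext_apply; apply: ext_apply.
move=> x Hx'; do 2 apply: apply_pt; apply: Ha.
by apply: box_mono Hx'; apply: leq_trans Hk; apply: leq_maxl.
Qed.


Definition gsig d (A : finType) (F : seq (fpattern d A)) : strategy d A := fun h =>
  match excluded_middle_informative (exists b, legal (fun _ : cell d => true) (state h) b /\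
                                       good F (apply_move (state h) b)) with
  | left H => proj1_sig (constructive_indefinite_description _ H)
  | right _ => None
  end.

Lemma gsig_legal d A (F : seq (fpattern d A)) h : legal (fun _ : cell d => true) (state h) (gsig F h).
Proof.
rewrite /gsig; case: excluded_middle_informative => // H.
by case: (constructive_indefinite_description _ H) => b [].
Qed.

Lemma gsig_good d A (F : seq (fpattern d A)) h :
  (exists b, legal (fun _ : cell d => true) (state h) b /\ good F (apply_move (state h) b)) ->
  good F (apply_move (state h) (gsig F h)).
Proof.
move=> Hex; rewrite /gsig; case: excluded_middle_informative => // H.
by case: (constructive_indefinite_description _ H) => b [].
Qed.

Lemma dir2 d (A : finType) (F : seq (fpattern d A)) :
  (forall n : nat, (1 <= n)%N -> B_wins F (box d n)) -> B_wins F (fun _ : cell d => true).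
Proof.
move=> H; exists (gsig F); split; first by move=> h; apply: gsig_legal.
move=> m Hm Ho.
have Hev : forall s, good F (state (hist m s.*2)).
  elim=> [|s IH]; first by apply: good_init.
  have [b [Hb Hgb]] := good_step IH (Hm s.*2).
  rewrite doubleS state_histS (Ho s.*2.+1); last by rewrite /= odd_double.
  apply: gsig_good; rewrite state_histS; by exists b.
move=> t q Hq Ha.
have [s Ets] : exists s, t = s.*2 \/ t = s.*2.+1.
  exists t./2; case Ot: (odd t); [right | left]; rewrite -[LHS]odd_double_half Ot //.
case: Ets => ->{t} in Ha.
  exact: (good_nopat (Hev s) Hq Ha).
apply: (good_nopat (Hev s.+1) Hq); rewrite doubleS state_histS.
exact: appears_ext (legal_ext (Hm _)) Ha.
Qed.

Unset Implicit Arguments.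

Theorem lemma1 (d : nat) (A : finType) (F : seq (fpattern d A)) :
  (0 < d)%N ->
  (forall q, q \in F -> wf_pattern q) ->
  B_wins F (fun _ : cell d => true) <->
  (forall n : nat, (1 <= n)%N -> B_wins F (box d n)).
Proof.
move=> _ _; split; first by move=> H n _; apply: dir1.
exact: dir2.
Qed.
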